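(* Let $0\leq B<1$ and $\Delta\geq3$, and set $d=\Delta-1$. Suppose $R_1,\dots,R_q,C_1,\dots,C_q$ solve the system \[R_i\propto\Big(BC_i+\sum_{j\neq i}C_j\Big)^{d},\qquad C_j\propto\Big(BR_j+\sum_{i\neq j}R_i\Big)^{d}\qquad(i,j\in[q])\] (proportionality constants independent of $i$, resp. $j$) and satisfy $R_i\propto C_i$ for all $i\in[q]$. Then $R_1=\dots=R_q$ and $C_1=\dots=C_q$.
   Context: This system is the tree recursion (fixpoint) system for the antiferromagnetic $q$-state Potts model with parameter $B$ (interaction matrix with diagonal entries $B$ and off-diagonal entries $1$); $B=0$ corresponds to $q$-colorings. *)

(* Defs.v *)
From mathcomp Require Import all_boot all_order all_algebra.
Set Implicit Arguments. Unset Strict Implicit. Unset Printing Implicit Defensive.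
Import Order.TTheory GRing.Theory Num.Theory.
Local Open Scope ring_scope.

Definition potts_field (R : realFieldType) (q : nat) (B : R) (X : 'I_q -> R)
  (i : 'I_q) : R :=
  B * X i + \sum_(j < q | j != i) X j.

(* Main.v *)
Require Import Defs.
From mathcomp Require Import all_boot all_order all_algebra.
From mathcomp Require Import lra.
Import Order.TTheory GRing.Theory Num.Theory.
Local Open Scope ring_scope.

Lemma field_eq (R : realFieldType) (q : nat) (B : R) (X : 'I_q -> R) i :
  potts_field B X i = \sum_k X k - (1 - B) * X i.
Proof.
rewrite /potts_field [in RHS](bigD1 i) //=.
lra.
Qed.

Lemma field_ge0 (R : realFieldType) (q : nat) (B : R) (X : 'I_q -> R) i :
  0 <= B -> (forall k, 0 < X k) -> 0 <= potts_field B X i.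
Proof.
move=> hB hX; rewrite /potts_field; apply: addr_ge0.
  by apply: mulr_ge0 => //; apply: ltW.
by apply: sumr_ge0 => k _; apply: ltW.
Qed.

Lemma const_of (R : realFieldType) (q Delta : nat) (B : R) (Rv Cv : 'I_q -> R) :
  0 <= B -> B < 1 -> (3 <= Delta)%N ->
  (forall i, 0 < Rv i) -> (forall i, 0 < Cv i) ->
  (exists lam : R, forall i, Rv i = lam * (potts_field B Cv i) ^+ Delta.-1) ->
  (exists kap : R, forall i, Rv i = kap * Cv i) ->
  forall i j, ~ (Cv i < Cv j).
Proof.
move=> hB0 hB1 hD hR hC [lam hl] [kap hk] i j hij.
have kpos : 0 < kap.
  have := hR i; rewrite hk pmulr_lgt0 //.
have hF : potts_field B Cv j < potts_field B Cv i.
  rewrite !field_eq.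
  have : 0 < (1 - B) * (Cv j - Cv i) by apply: mulr_gt0; lra.
  lra.
have hFj := @field_ge0 _ _ B Cv j hB0 hC.
have hP : potts_field B Cv j ^+ Delta.-1 < potts_field B Cv i ^+ Delta.-1.
  rewrite ltrXn2r //; by move: hD; case: (Delta) => [|[|]].
have hPj : 0 <= potts_field B Cv j ^+ Delta.-1 by apply: exprn_ge0.
have hRij : Rv i < Rv j by rewrite !hk ltr_pM2l.
have hRj := hR j.
move: hRij hRj hP hPj; rewrite !hl.
set a := potts_field B Cv i ^+ Delta.-1.
set b := potts_field B Cv j ^+ Delta.-1.
move=> h1 h2 h3 h4.
nra.
Qed.

Theorem lemma25 (R : realFieldType) (q Delta : nat) (B : R)
  (Rv Cv : 'I_q -> R) :
  0 <= B -> B < 1 -> (3 <= Delta)%N ->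
  (forall i, 0 < Rv i) -> (forall i, 0 < Cv i) ->
  (exists lam : R, forall i, Rv i = lam * (potts_field B Cv i) ^+ Delta.-1) ->
  (exists mu : R, forall j, Cv j = mu * (potts_field B Rv j) ^+ Delta.-1) ->
  (exists kap : R, forall i, Rv i = kap * Cv i) ->
  (forall i j, Rv i = Rv j) /\ (forall i j, Cv i = Cv j).
Proof.
move=> hB0 hB1 hD hR hC hl _ hk.
have hc := @const_of R q Delta B Rv Cv hB0 hB1 hD hR hC hl hk.
have hCc : forall i j, Cv i = Cv j.
  move=> i j; case: (ltgtP (Cv i) (Cv j)) => // h.
    by case: (hc i j h).
  by case: (hc j i h).
split=> // i j; case: hk => kap hk; by rewrite !hk (hCc i j).
Qed.
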